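(* Let $p,q$ be positive integers and let $\mathbb T$ be a finite rooted tree whose root has at most $q$ children, in which every other vertex in an even layer has at most $q$ children and every vertex in an odd layer has at most $p$ children. Then its adjacency matrix $A^{\mathbb T}$ satisfies $\|A^{\mathbb T}\|\le\sqrt p+\sqrt q$.
   Context: Layers are indexed by distance from the root; the root forms layer $0$ (even). $\|\cdot\|$ denotes the operator norm. *)

(* Defs.v *)
From HB Require Import structures.
From mathcomp Require Import all_boot all_order all_algebra.
From mathcomp Require Import classical_sets reals.
Set Implicit Arguments. Unset Strict Implicit. Unset Printing Implicit Defensive.
Import Order.TTheory GRing.Theory Num.Theory.
Local Open Scope ring_scope.
Local Open Scope classical_set_scope.

(* A finite rooted tree on the vertex set 'I_n.+1 with root ord0, encoded by a
   parent map [par] : every non-root vertex i has parent [par i] with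
   [par i < i] (value of [par ord0] is irrelevant). Every finite rooted tree
   admits such a labelling (e.g. BFS order). *)
Definition parent_map (n : nat) (par : 'I_n.+1 -> 'I_n.+1) : Prop :=
  forall i : 'I_n.+1, i != ord0 -> (par i < i)%N.

Definition children (n : nat) (par : 'I_n.+1 -> 'I_n.+1) (v : 'I_n.+1)
  : {set 'I_n.+1} := [set u | (u != ord0) && (par u == v)].

Fixpoint depth_fuel (n : nat) (par : 'I_n.+1 -> 'I_n.+1) (k : nat)
  (i : 'I_n.+1) : nat :=
  if k is k'.+1 then (if i == ord0 then 0%N else (depth_fuel par k' (par i)).+1)
  else 0%N.
Definition depth (n : nat) (par : 'I_n.+1 -> 'I_n.+1) (i : 'I_n.+1) : nat :=
  depth_fuel par n.+1 i.

Definition tree_adj (R : realType) (n : nat) (par : 'I_n.+1 -> 'I_n.+1)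
  : 'M[R]_n.+1 :=
  \matrix_(i, j) (((i != ord0) && (par i == j)) || ((j != ord0) && (par j == i)))%:R.

Definition enorm (R : realType) (m : nat) (x : 'cV[R]_m) : R :=
  Num.sqrt (\sum_i x i ord0 ^+ 2).

Definition opnorm (R : realType) (m : nat) (A : 'M[R]_m) : R :=
  sup [set enorm (A *m x) | x in [set x : 'cV[R]_m | enorm x <= 1]].

(* Main.v *)
Require Import Defs.
From HB Require Import structures.
From mathcomp Require Import all_boot all_order all_algebra.
From mathcomp Require Import classical_sets reals.
From mathcomp Require Import ring lra.
Import Order.TTheory GRing.Theory Num.Theory.
Local Open Scope ring_scope.

Section Helpers.
Variable R : realType.

Lemma cs_card (I : finType) (A : pred I) (x : I -> R) :
  (\sum_(c in A) x c) ^+ 2 <= #|A|%:R * \sum_(c in A) x c ^+ 2.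
Proof.
have E1 : (\sum_(c in A) x c) ^+ 2 = \sum_(c in A) \sum_(d in A) x c * x d.
  by rewrite expr2 big_distrl /=; apply: eq_bigr => c _; rewrite big_distrr.
have E2 : #|A|%:R * \sum_(c in A) x c ^+ 2 = \sum_(c in A) \sum_(d in A) x c ^+ 2.
  by rewrite mulr_sumr; apply: eq_bigr => c _; rewrite sumr_const mulr_natl.
have E3 : #|A|%:R * \sum_(c in A) x c ^+ 2 = \sum_(c in A) \sum_(d in A) x d ^+ 2.
  rewrite E2 exchange_big /=; done.
have E4 : 2 * (#|A|%:R * \sum_(c in A) x c ^+ 2) =
    \sum_(c in A) \sum_(d in A) (x c ^+ 2 + x d ^+ 2).
  rewrite (_ : (2:R) = 1 + 1) // mulrDl mul1r.
  rewrite [X in X + _]E2 [X in _ + X]E3 -big_split /=.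
  by apply: eq_bigr => c _; rewrite -big_split.
have H : 2 * (\sum_(c in A) x c) ^+ 2 <= 2 * (#|A|%:R * \sum_(c in A) x c ^+ 2).
  rewrite E4 E1 mulr_sumr.
  apply: ler_sum => c _; rewrite mulr_sumr; apply: ler_sum => d _.
  rewrite -subr_ge0 (_ : _ - _ = (x c - x d) ^+ 2); first exact: sqr_ge0.
  by ring.
by rewrite ler_pM2l in H.
Qed.

Lemma star_bound (T : finType) (f : T -> T) (S : pred T) (d : nat) (x : T -> R)
  (H1 : forall c, S c -> ~~ S (f c))
  (H2 : forall v, (#|[pred c | S c && (f c == v)]| <= d)%N) :
  \sum_i ((if S i then x (f i) else 0) + \sum_(c | S c && (f c == i)) x c) ^+ 2
   <= d%:R * \sum_i x i ^+ 2.
Proof.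
have Cs : forall i, \sum_(c | S c && (f c == i)) x c = \sum_(c in [pred c | S c && (f c == i)]) x c.
  by move=> i; apply: eq_bigl => c; rewrite inE.
have Cs2 : forall i, \sum_(c | S c && (f c == i)) x c ^+ 2 = \sum_(c in [pred c | S c && (f c == i)]) x c ^+ 2.
  by move=> i; apply: eq_bigl => c; rewrite inE.
have St1 : forall i, ((if S i then x (f i) else 0) + \sum_(c | S c && (f c == i)) x c) ^+ 2
   = (if S i then x (f i) ^+ 2 else 0) + (\sum_(c | S c && (f c == i)) x c) ^+ 2.
  move=> i; case: ifP => Si.
    rewrite big1 ?expr0n ?addr0 //= => c /andP [Sc /eqP fc].
    by move: (H1 c Sc); rewrite fc Si.
  by rewrite !add0r.
rewrite (eq_bigr _ (fun i _ => St1 i)) big_split /=.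
have P1 : \sum_i (if S i then x (f i) ^+ 2 else 0) <= d%:R * \sum_i (if S i then 0 else x i ^+ 2).
  rewrite -big_mkcond /= (partition_big f predT) //= mulr_sumr.
  apply: ler_sum => j _.
  rewrite (eq_bigr (fun _ => x j ^+ 2)); last by move=> i /andP [_ /eqP ->].
  have -> : \sum_(i | S i && (f i == j)) x j ^+ 2 = \sum_(i in [pred c | S c && (f c == j)]) x j ^+ 2.
    by apply: eq_bigl => c; rewrite inE.
  rewrite sumr_const -[x j ^+ 2 *+ _]mulr_natl.
  case: ifP => Sj.
    rewrite mulr0 (_ : #|_| = 0%N) ?mul0r //.
    apply: eq_card0 => c; rewrite inE; apply/negP => /andP [Sc /eqP fc].
    by move: (H1 c Sc); rewrite fc Sj.
  by apply: ler_wpM2r; [exact: sqr_ge0 | rewrite ler_nat; exact: H2].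
have P2 : \sum_i (\sum_(c | S c && (f c == i)) x c) ^+ 2 <= d%:R * \sum_i (if S i then x i ^+ 2 else 0).
  rewrite -big_mkcond /= [X in _ <= _ * X](partition_big f predT) //= mulr_sumr.
  apply: ler_sum => j _.
  rewrite Cs Cs2; apply: le_trans (cs_card T [pred c | S c && (f c == j)] x) _.
  apply: ler_wpM2r; last by rewrite ler_nat; exact: H2.
  by apply: sumr_ge0 => c _; exact: sqr_ge0.
apply: le_trans (lerD P1 P2) _.
rewrite -mulrDr -big_split /=; apply: ler_wpM2l => //.
by apply: ler_sum => i _; case: ifP => _; rewrite ?add0r ?addr0.
Qed.

Lemma sq_id (u v a b : R) :
  (u + v) * (u * a ^+ 2 + v * b ^+ 2) - u * v * (a + b) ^+ 2 = (u * a - v * b) ^+ 2.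
Proof. by ring. Qed.

Lemma sq_id2 (u v X : R) :
  (u + v) * (u * (v ^+ 2 * X) + v * (u ^+ 2 * X)) = u * v * (u + v) ^+ 2 * X.
Proof. by ring. Qed.

End Helpers.

Lemma depth_fuel_stable (n : nat) (par : 'I_n.+1 -> 'I_n.+1) (ht : parent_map par) :
  forall k (i : 'I_n.+1), (i < k)%N -> depth_fuel par k i = depth_fuel par k.+1 i.
Proof.
elim=> [|k IH] i //= hi.
case: ifP => // /negbT hi0.
by rewrite IH // (leq_trans (ht i hi0)).
Qed.

Lemma depth_par (n : nat) (par : 'I_n.+1 -> 'I_n.+1) (ht : parent_map par) (i : 'I_n.+1) :
  i != ord0 -> depth par i = (depth par (par i)).+1.
Proof.
move=> hi; rewrite /depth /= (negbTE hi); congr S.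
apply: depth_fuel_stable => //.
by rewrite (leq_trans (ht i hi)) // -ltnS.
Qed.

Theorem lemmaC3 (R : realType) (p q : nat) (hp : (0 < p)%N) (hq : (0 < q)%N)
  (n : nat) (par : 'I_n.+1 -> 'I_n.+1) (htree : parent_map par)
  (hdeg : forall v : 'I_n.+1,
     (#|children par v| <= (if odd (depth par v) then p else q))%N) :
  opnorm (tree_adj R par) <= Num.sqrt (p%:R) + Num.sqrt (q%:R).
Proof.
set sp := Num.sqrt (p%:R : R); set sq := Num.sqrt (q%:R : R).
have sp0 : 0 < sp by rewrite sqrtr_gt0 ltr0n.
have sq0 : 0 < sq by rewrite sqrtr_gt0 ltr0n.
have sp2 : sp ^+ 2 = p%:R by rewrite sqr_sqrtr // ler0n.
have sq2 : sq ^+ 2 = q%:R by rewrite sqr_sqrtr // ler0n.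
rewrite /opnorm; apply: ge_sup.
  exists (enorm (tree_adj R par *m 0)); exists 0 => //.
  rewrite /= /enorm big1 ?sqrtr0 ?ler01 // => i _.
  by rewrite mxE expr2 mul0r.
move=> _ [x Hx <-].
pose xf : 'I_n.+1 -> R := fun i => x i ord0.
set Se := fun i : 'I_n.+1 => (i != ord0) && ~~ odd (depth par (par i)).
set So := fun i : 'I_n.+1 => (i != ord0) && odd (depth par (par i)).
set ye := fun i => (if Se i then xf (par i) else 0) + \sum_(c | Se c && (par c == i)) xf c.
set yo := fun i => (if So i then xf (par i) else 0) + \sum_(c | So c && (par c == i)) xf c.
have key : forall i, (tree_adj R par *m x) i ord0 = ye i + yo i.
  move=> i; rewrite mxE.
  have E : forall j, tree_adj R par i j * x j ord0 =
      ((i != ord0) && (par i == j))%:R * xf j + ((j != ord0) && (par j == i))%:R * xf j.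
    move=> j; rewrite mxE -mulrDl; congr (_ * _).
    case a: ((i != ord0) && (par i == j)); case b: ((j != ord0) && (par j == i)) => //=;
      rewrite ?add0r ?addr0 //.
    move/andP: a => [i0 /eqP pi]; move/andP: b => [j0 /eqP pj].
    have h1 := htree i i0; have h2 := htree j j0.
    rewrite pi in h1; rewrite pj in h2.
    by have := ltn_trans h1 h2; rewrite ltnn.
  rewrite (eq_bigr _ (fun j _ => E j)) big_split /=.
  have F1 : \sum_j ((i != ord0) && (par i == j))%:R * xf j = if i != ord0 then xf (par i) else 0.
    case i0: (i != ord0) => /=.
      rewrite (bigD1 (par i)) //= eqxx mul1r big1 ?addr0 // => j nj.
      by rewrite eq_sym (negbTE nj) mul0r.
    by rewrite big1 // => j _; rewrite mul0r.
  have F2 : \sum_j ((j != ord0) && (par j == i))%:R * xf j =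
      \sum_(j | (j != ord0) && (par j == i)) xf j.
    rewrite [in RHS]big_mkcond; apply: eq_bigr => j _.
    by case: ifP => _; rewrite ?mul1r ?mul0r.
  rewrite F1 F2 /ye /yo (bigID (fun j => odd (depth par (par j)))) /=.
  have hif : (if i != ord0 then xf (par i) else 0) =
      (if Se i then xf (par i) else 0) + (if So i then xf (par i) else 0).
    by rewrite /Se /So; case: (i != ord0); case: (odd _) => /=; rewrite ?addr0 ?add0r.
  have hS1 : \sum_(j | ((j != ord0) && (par j == i)) && odd (depth par (par j))) xf j =
      \sum_(c | So c && (par c == i)) xf c.
    by apply: eq_bigl => j; rewrite /So; case: (j != ord0); case: (par j == i); case: (odd _).
  have hS2 : \sum_(j | ((j != ord0) && (par j == i)) && ~~ odd (depth par (par j))) xf j =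
      \sum_(c | Se c && (par c == i)) xf c.
    by apply: eq_bigl => j; rewrite /Se; case: (j != ord0); case: (par j == i); case: (odd _).
  by rewrite hif hS1 hS2 [X in _ + X = _]addrC addrACA.
have Ae : \sum_i ye i ^+ 2 <= q%:R * \sum_i xf i ^+ 2.
  apply: (star_bound R 'I_n.+1 par Se q xf).
    move=> c /andP [c0 ev]; apply/negP => /andP [pc0 ev2].
    by rewrite (depth_par _ _ htree _ pc0) /= negbK (negbTE ev2) in ev.
  move=> v; case hv: (odd (depth par v)).
    rewrite (@eq_card _ _ pred0) ?card0 //.
    move=> c; rewrite !inE /Se; apply/negP => /andP [/andP [_ ev] /eqP pc].
    by rewrite pc hv in ev.
  apply: leq_trans (subset_leq_card (_ : _ \subset children par v)) _.
    by apply/fintype.subsetP => c; rewrite !inE => /andP[/andP[c0 _] pc]; rewrite c0 pc.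
  by have := hdeg v; rewrite hv.
have Ao : \sum_i yo i ^+ 2 <= p%:R * \sum_i xf i ^+ 2.
  apply: (star_bound R 'I_n.+1 par So p xf).
    move=> c /andP [c0 ev]; apply/negP => /andP [pc0 ev2].
    by rewrite (depth_par _ _ htree _ pc0) /= ev2 in ev.
  move=> v; case hv: (odd (depth par v)); last first.
    rewrite (@eq_card _ _ pred0) ?card0 //.
    move=> c; rewrite !inE /So; apply/negP => /andP [/andP [_ ev] /eqP pc].
    by rewrite pc hv in ev.
  apply: leq_trans (subset_leq_card (_ : _ \subset children par v)) _.
    by apply/fintype.subsetP => c; rewrite !inE => /andP[/andP[c0 _] pc]; rewrite c0 pc.
  by have := hdeg v; rewrite hv.
set X := \sum_i xf i ^+ 2.
have X0 : 0 <= X by apply: sumr_ge0 => i _; exact: sqr_ge0.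
have X1 : X <= 1.
  have : Num.sqrt X <= Num.sqrt 1 by rewrite sqrtr1; exact: Hx.
  by rewrite ler_sqrt // ler01.
rewrite /enorm (eq_bigr (fun i => (ye i + yo i) ^+ 2)); last by move=> i _; rewrite key.
set Tt := \sum_i (ye i + yo i) ^+ 2.
set A := \sum_i ye i ^+ 2.
set B := \sum_i yo i ^+ 2.
have Hpt : sp * sq * Tt <= (sp + sq) * (sp * A + sq * B).
  rewrite /Tt /A /B mulr_sumr mulr_sumr mulr_sumr -big_split mulr_sumr /=.
  apply: ler_sum => i _; move: (ye i) (yo i) => a b.
  by rewrite -subr_ge0 sq_id; exact: sqr_ge0.
have H2 : sp * sq * Tt <= sp * sq * (sp + sq) ^+ 2.
  apply: le_trans Hpt _.
  apply: le_trans (_ : (sp + sq) * (sp * (sq ^+ 2 * X) + sq * (sp ^+ 2 * X)) <= _).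
    apply: ler_wpM2l; first by rewrite addr_ge0 // ltW.
    apply: lerD; apply: ler_wpM2l; [exact: ltW | by rewrite sq2 | exact: ltW | by rewrite sp2].
  rewrite sq_id2.
  rewrite -[Y in _ <= Y]mulr1; apply: ler_wpM2l => //.
  by apply: mulr_ge0; [apply: mulr_ge0; apply: ltW | exact: sqr_ge0].
rewrite ler_pM2l ?mulr_gt0 // in H2.
apply: (@le_trans _ _ (Num.sqrt ((sp + sq) ^+ 2))).
  by rewrite ler_sqrt // sqr_ge0.
by rewrite sqrtr_sqr ger0_norm // addr_ge0 // ltW.
Qed.
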